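(* Let $d$ be prime, $n\ge1$, $G$ nontrivial and invertible over $\mathbb Z_d$, and let $\Lambda_1,\Lambda_2$ be $n$-qudit quantum channels. Then the convolution $\Lambda_1\boxtimes\Lambda_2$ (the channel whose Choi state is $J_{\Lambda_1}\boxtimes J_{\Lambda_2}$) is well defined and satisfies $$\Lambda_1\boxtimes\Lambda_2=\mathcal E\circ(\Lambda_1\otimes\Lambda_2)\circ\mathcal E^{-1},$$ where $\mathcal E(\cdot)=\mathrm{Tr}_B[U(\cdot)U^\dagger]$ and $\mathcal E^{-1}(\rho)=U^\dagger(\rho\otimes I_n/d^n)U$.
   Context: Fix a prime $d$. $G=\begin{pmatrix}g_{00}&g_{01}\\ g_{10}&g_{11}\end{pmatrix}$ over $\mathbb Z_d$, $\det G\not\equiv 0$, $N=(\det G)^{-1}$; nontrivial means at most one entry is $0$ mod $d$. For any $m$, the key unitary on $(\mathbb C^d)^{\otimes m}\otimes(\mathbb C^d)^{\otimes m}$ is $U|\vec i\rangle|\vec j\rangle=|Ng_{11}\vec i-Ng_{10}\vec j\rangle|-Ng_{01}\vec i+Ng_{00}\vec j\rangle$ ($\vec i,\vec j\in\mathbb Z_d^m$), and for $m$-qudit states $\rho\boxtimes\sigma=\mathrm{Tr}_B[U(\rho\otimes\sigma)U^\dagger]$. The Choi state of an $n$-qudit channel $\Lambda$ is the $2n$-qudit state $J_\Lambda=(\mathrm{id}_A\otimes\Lambda)(|\Phi\rangle\langle\Phi|)$ with $|\Phi\rangle=d^{-n/2}\sum_{\vec j\in\mathbb Z_d^n}|\vec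 j\rangle_A|\vec j\rangle_{A'}$, so that $\Lambda(\rho)=d^n\mathrm{Tr}_A[J_\Lambda(\rho^T\otimes I)]$. The convolution $J_{\Lambda_1}\boxtimes J_{\Lambda_2}$ is taken with $m=2n$ (the $2n$ qudits of $AA'$), and $\Lambda_1\boxtimes\Lambda_2$ is the map $\rho\mapsto d^n\mathrm{Tr}_A[(J_{\Lambda_1}\boxtimes J_{\Lambda_2})(\rho^T\otimes I)]$. In $\mathcal E$, $U$ is the key unitary with $m=n$. *)

(* Defs.v *)
From mathcomp Require Import all_boot all_algebra.
Set Implicit Arguments. Unset Strict Implicit. Unset Printing Implicit Defensive.
Import GRing.Theory Num.Theory.
Local Open Scope ring_scope.

Section Ops.
Variable C : numClosedFieldType.

(* Operators on the Hilbert space C^T with orthonormal basis indexed by T. *)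
Definition op (T : finType) := T -> T -> C.

Definition mulop (T : finType) (X Y : op T) : op T :=
  fun i j => \sum_k X i k * Y k j.
Definition adjop (T : finType) (X : op T) : op T := fun i j => (X j i)^*.
Definition trop (T : finType) (X : op T) : C := \sum_i X i i.
Definition transpose (T : finType) (X : op T) : op T := fun i j => X j i.
Definition idop (T : finType) : op T := fun i j => (i == j)%:R.
Definition scaleop (T : finType) (a : C) (X : op T) : op T := fun i j => a * X i j.
Definition addop (T : finType) (X Y : op T) : op T := fun i j => X i j + Y i j.

Definition tensop (S T : finType) (X : op S) (Y : op T) : op (S * T)%type :=
  fun i j => X i.1 j.1 * Y i.2 j.2.
Definition ptrace1 (S T : finType) (X : op (S * T)%type) : op T :=
  fun i j => \sum_s X (s, i) (s, j).
Definition ptrace2 (S T : finType) (X : op (S * T)%type) : op S :=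
  fun i j => \sum_t X (i, t) (j, t).

Definition ketbra (T : finType) (a b : T) : op T :=
  fun i j => ((i == a) && (j == b))%:R.

Definition psd (T : finType) (X : op T) : Prop :=
  forall v : T -> C, 0 <= \sum_i \sum_j (v i)^* * X i j * v j.

Definition linmap (S T : finType) (Phi : op S -> op T) : Prop :=
  forall (a : C) (X Y : op S), Phi (addop (scaleop a X) Y) = addop (scaleop a (Phi X)) (Phi Y).

(* id_R ⊗ Phi, defined blockwise: (id ⊗ Phi)(Σ |r><r'| ⊗ X_{rr'}) = Σ |r><r'| ⊗ Phi(X_{rr'}) *)
Definition idtens (R S T : finType) (Phi : op S -> op T) (X : op (R * S)%type) : op (R * T)%type :=
  fun i j => Phi (fun s s' => X (i.1, s) (j.1, s')) i.2 j.2.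

(* Phi1 ⊗ Phi2, defined by linear extension from product matrix units *)
Definition tensmap (S1 T1 S2 T2 : finType) (Phi1 : op S1 -> op T1) (Phi2 : op S2 -> op T2)
    (X : op (S1 * S2)%type) : op (T1 * T2)%type :=
  fun i j => \sum_a \sum_b X a b * (Phi1 (ketbra a.1 b.1) i.1 j.1 * Phi2 (ketbra a.2 b.2) i.2 j.2).

Definition is_channel (S T : finType) (Phi : op S -> op T) : Prop :=
  [/\ linmap Phi,
      (forall (k : nat) (X : op ('I_k * S)%type), psd X -> psd (idtens Phi X)) &
      (forall X : op S, trop (Phi X) = trop X)].

Definition conj (T : finType) (U X : op T) : op T := mulop (mulop U X) (adjop U).
End Ops.

(* Z_d^m (row vectors), the computational basis labels of m qudits ('F_d = Z_d for d prime). *)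
Notation qv d m := 'rV['F_d]_m.

Definition nontrivial (K : fieldType) (G : 'M[K]_2) : bool :=
  (#|[set ij : 'I_2 * 'I_2 | G ij.1 ij.2 == 0%R]| <= 1)%N.

Definition keymap (K : fieldType) (V : lmodType K) (G : 'M[K]_2) (x : V * V) : V * V :=
  let N := (\det G)^-1 in
  (N * G 1 1 *: x.1 - N * G 1 0 *: x.2, - (N * G 0 1) *: x.1 + N * G 0 0 *: x.2).

Definition permop (C : numClosedFieldType) (T : finType) (f : T -> T) : op C T :=
  fun y x => (y == f x)%:R.

Section Qudits.
Variables (C : numClosedFieldType) (d : nat) (G : 'M['F_d]_2).

Definition Ukey (m : nat) : op C (qv d m * qv d m)%type :=
  @permop C _ (@keymap _ (qv d m) G).

(* key unitary for the 2n qudits A A' (basis labels Z_d^n × Z_d^n = Z_d^{2n},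
   acting componentwise, i.e. the m = 2n key unitary) *)
Definition Ukey2 (n : nat) : op C ((qv d n * qv d n) * (qv d n * qv d n))%type :=
  @permop C _ (@keymap _ (qv d n * qv d n)%type G).

Definition sconv (m : nat) (rho sigma : op C (qv d m)) : op C (qv d m) :=
  ptrace2 (conj (@Ukey m) (tensop rho sigma)).

Definition sconv2 (n : nat) (J1 J2 : op C (qv d n * qv d n)%type) : op C (qv d n * qv d n)%type :=
  ptrace2 (conj (@Ukey2 n) (tensop J1 J2)).

(* Choi state J_Lambda = (id_A ⊗ Lambda)(|Phi><Phi|),
   |Phi> = d^{-n/2} Σ_j |j>_A |j>_A' *)
Definition maxent (n : nat) : op C (qv d n * qv d n)%type :=
  fun i j => (d ^ n)%:R^-1 * ((i.1 == i.2) && (j.1 == j.2))%:R.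
Definition choi (n : nat) (L : op C (qv d n) -> op C (qv d n)) : op C (qv d n * qv d n)%type :=
  idtens L (@maxent n).

Definition map_of_choi (n : nat) (J : op C (qv d n * qv d n)%type) (rho : op C (qv d n)) : op C (qv d n) :=
  scaleop (d ^ n)%:R (ptrace1 (mulop J (tensop (transpose rho) (@idop C (qv d n))))).

Definition chconv (n : nat) (L1 L2 : op C (qv d n) -> op C (qv d n)) :
    op C (qv d n) -> op C (qv d n) :=
  map_of_choi (sconv2 (choi L1) (choi L2)).

Definition Emap (n : nat) (X : op C (qv d n * qv d n)%type) : op C (qv d n) :=
  ptrace2 (conj (@Ukey n) X).
Definition Einv (n : nat) (rho : op C (qv d n)) : op C (qv d n * qv d n)%type :=
  mulop (mulop (adjop (@Ukey n)) (tensop rho (scaleop (d ^ n)%:R^-1 (@idop C (qv d n))))) (@Ukey n).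
End Qudits.

(* Main.v *)
Require Import Defs.
From mathcomp Require Import all_boot all_algebra.
Local Open Scope ring_scope.
From Stdlib Require Import FunctionalExtensionality.
From mathcomp Require Import ring.
Set Implicit Arguments. Unset Strict Implicit. Unset Printing Implicit Defensive.
Import GRing.Theory Num.Theory.
Local Open Scope ring_scope.

Section Gen.
Variable C : numClosedFieldType.

Lemma sum_collapse (T : finType) (f g : T -> T) (fg : cancel f g) (gf : cancel g f)
  (y : T) (F : T -> C) : \sum_k (y == f k)%:R * F k = F (g y).
Proof.
rewrite (bigD1 (g y)) //= gf eqxx mul1r big1 ?addr0 // => k kg.
rewrite (_ : (y == f k) = false) ?mul0r //; apply/negbTE; apply: contra kg => /eqP ->.
by rewrite fg.
Qed.

Lemma psd_ext (T : finType) (X Y : op C T) : (forall i j, X i j = Y i j) -> psd X -> psd Y.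
Proof.
move=> e; have -> : Y = X by apply: functional_extensionality => i; apply: functional_extensionality => j.
done.
Qed.

Lemma psd_reindex (S T : finType) (h : S -> T) (h' : T -> S) (hK : cancel h h')
  (h'K : cancel h' h) (X : op C T) : psd X -> psd (fun i j => X (h i) (h j)).
Proof.
move=> pX v; have := pX (fun t => v (h' t)).
have bh : {on [pred i | true], bijective h} by exact: onW_bij _ (Bijective hK h'K).
rewrite (reindex h bh) /=.
under eq_bigr => i _ do rewrite (reindex h bh) /=.
by under eq_bigr => i _ do under eq_bigr => j _ do rewrite !hK.
Qed.

Definition CPall (S T : finType) (Phi : op C S -> op C T) :=
  forall (R : finType) (X : op C (R * S)%type), psd X -> psd (idtens Phi X).

Lemma CPk_all (S T : finType) (Phi : op C S -> op C T) :
  (forall (k : nat) (X : op C ('I_k * S)%type), psd X -> psd (idtens Phi X)) -> CPall Phi.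
Proof.
move=> H R X pX.
pose h (p : 'I_#|R| * S) : R * S := (enum_val p.1, p.2).
pose h' (p : R * S) : 'I_#|R| * S := (enum_rank p.1, p.2).
pose g (p : 'I_#|R| * T) : R * T := (enum_val p.1, p.2).
pose g' (p : R * T) : 'I_#|R| * T := (enum_rank p.1, p.2).
have hK : cancel h h' by case=> a b; rewrite /h /h' /= enum_valK.
have h'K : cancel h' h by case=> a b; rewrite /h /h' /= enum_rankK.
have gK : cancel g g' by case=> a b; rewrite /g /g' /= enum_valK.
have g'K : cancel g' g by case=> a b; rewrite /g /g' /= enum_rankK.
have := H _ _ (psd_reindex hK h'K pX).
move=> /(psd_reindex g'K gK); apply: psd_ext => i j.
rewrite /idtens /=. by case: i => [a b]; case: j => [a2 b2]; rewrite /h /= !enum_rankK.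
Qed.

Lemma CP_comp (S T U : finType) (Phi : op C T -> op C U) (Psi : op C S -> op C T) :
  CPall Phi -> CPall Psi -> CPall (fun X => Phi (Psi X)).
Proof. by move=> H1 H2 R X pX; exact: (H1 _ _ (H2 _ _ pX)). Qed.


Lemma sum_pair (I J : finType) (F : (I * J)%type -> C) :
  \sum_p F p = \sum_i \sum_j F (i, j).
Proof. by rewrite pair_bigA; apply: eq_bigr; case. Qed.

Lemma kraus_CP (S T W : finType) (Phi : op C S -> op C T) (c : C) (K : W -> T -> S -> C) :
  0 <= c ->
  (forall X i j, Phi X i j = c * \sum_t \sum_k \sum_l K t i k * X k l * (K t j l)^*) ->
  CPall Phi.
Proof.
move=> c0 HP R X pX v.
pose w t (p : R * S) := \sum_j (K t j p.2)^* * v (p.1, j).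
pose A t r k r' l i j := (v (r, i))^* * K t i k * X (r, k) (r', l) * (K t j l)^* * v (r', j).
have E1 : \sum_p \sum_q (v p)^* * idtens Phi X p q * v q =
  c * \sum_t \sum_r \sum_k \sum_r' \sum_l \sum_i \sum_j A t r k r' l i j.
  rewrite /idtens; under eq_bigr => p _ do under eq_bigr => q _ do rewrite HP.
  rewrite sum_pair; under eq_bigr => r _ do under eq_bigr => i _ do rewrite sum_pair.
  have e : forall r i r' j, (v (r, i))^* * (c * \sum_t \sum_k \sum_l K t i k *
     X (r, k) (r', l) * (K t j l)^*) * v (r', j) = c * \sum_t \sum_k \sum_l A t r k r' l i j.
    move=> r i r' j; rewrite mulrCA -mulrA; congr (_ * _).
    rewrite big_distrr big_distrl; apply: eq_bigr => t _ /=.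
    rewrite big_distrr big_distrl; apply: eq_bigr => k _ /=.
    rewrite big_distrr big_distrl; apply: eq_bigr => l _ /=.
    by rewrite /A !mulrA.
  under eq_bigr => r _ do under eq_bigr => i _ do under eq_bigr => r' _ do
    under eq_bigr => j _ do rewrite e.
  under eq_bigr => r _ do under eq_bigr => i _ do under eq_bigr => r' _ do
    rewrite -big_distrr.
  under eq_bigr => r _ do under eq_bigr => i _ do rewrite -big_distrr.
  under eq_bigr => r _ do rewrite -big_distrr.
  rewrite -big_distrr; congr (_ * _).
  (* order r i r' j t k l -> t r k r' l i j *)
  under eq_bigr => r _ do under eq_bigr => i _ do under eq_bigr => r' _ do rewrite exchange_big.
  under eq_bigr => r _ do under eq_bigr => i _ do rewrite exchange_big.
  under eq_bigr => r _ do rewrite exchange_big.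
  rewrite exchange_big.
  under eq_bigr => t _ do under eq_bigr => r _ do under eq_bigr => i _ do under eq_bigr => r' _ do rewrite exchange_big.
  under eq_bigr => t _ do under eq_bigr => r _ do under eq_bigr => i _ do rewrite exchange_big.
  under eq_bigr => t _ do under eq_bigr => r _ do rewrite exchange_big.
  under eq_bigr => t _ do under eq_bigr => r _ do under eq_bigr => k _ do rewrite exchange_big.
  under eq_bigr => t _ do under eq_bigr => r _ do under eq_bigr => k _ do under eq_bigr => r' _ do rewrite exchange_big.
  under eq_bigr => t _ do under eq_bigr => r _ do under eq_bigr => k _ do under eq_bigr => r' _ do
    under eq_bigr => j _ do rewrite exchange_big.
  under eq_bigr => t _ do under eq_bigr => r _ do under eq_bigr => k _ do under eq_bigr => r' _ do rewrite exchange_big.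
  under eq_bigr => t _ do under eq_bigr => r _ do under eq_bigr => k _ do under eq_bigr => r' _ do
    under eq_bigr => l _ do rewrite exchange_big.
  by [].
have E2 : \sum_t \sum_p \sum_q (w t p)^* * X p q * w t q =
   \sum_t \sum_r \sum_k \sum_r' \sum_l \sum_i \sum_j A t r k r' l i j.
  apply: eq_bigr => t _; rewrite sum_pair; apply: eq_bigr => r _; apply: eq_bigr => k _.
  rewrite sum_pair; apply: eq_bigr => r' _; apply: eq_bigr => l _.
  rewrite /w /= rmorph_sum big_distrl /= big_distrl /=; apply: eq_bigr => i _.
  rewrite big_distrr /=; apply: eq_bigr => j _.
  by rewrite rmorphM /= conjCK /A; ring.
rewrite E1 -E2; apply: mulr_ge0 => //; apply: sumr_ge0 => t _; exact: pX.
Qed.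


Lemma sum_delta (T : finType) (a : T) (F : T -> C) : \sum_k (k == a)%:R * F k = F a.
Proof.
rewrite (bigD1 a) //= eqxx mul1r big1 ?addr0 // => k ka.
by rewrite (negbTE ka) mul0r.
Qed.

Lemma sum_deltar (T : finType) (a : T) (F : T -> C) : \sum_k F k * (k == a)%:R = F a.
Proof. by rewrite -(sum_delta a F); apply: eq_bigr => k _; rewrite mulrC. Qed.

Lemma sum_delta' (T : finType) (a : T) (F : T -> C) : \sum_k (a == k)%:R * F k = F a.
Proof. by rewrite -(sum_delta a F); apply: eq_bigr => k _; rewrite eq_sym. Qed.

Lemma sum_collapse' (T : finType) (f g : T -> T) (fg : cancel f g) (gf : cancel g f)
  (y : T) (F : T -> C) : \sum_k F k * (y == f k)%:R^* = F (g y).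
Proof. by rewrite -(sum_collapse fg gf); apply: eq_bigr => k _; rewrite conjC_nat mulrC. Qed.

Lemma conj_perm (T : finType) (f g : T -> T) (fg : cancel f g) (gf : cancel g f)
  (X : op C T) y y' : conj (permop C f) X y y' = X (g y) (g y').
Proof.
rewrite /conj /mulop /adjop /permop.
under eq_bigr => l _ do rewrite (sum_collapse fg gf y (fun k => X k l)).
by rewrite (sum_collapse' fg gf).
Qed.

Lemma conj_perm_inv (T : finType) (f : T -> T) (W : op C T) x x' :
  mulop (mulop (adjop (permop C f)) W) (permop C f) x x' = W (f x) (f x').
Proof.
rewrite /mulop /adjop /permop.
under eq_bigr => l _ do under eq_bigr => k _ do rewrite conjC_nat.
under eq_bigr => l _ do rewrite (sum_delta (f x) (fun k => W k l)).
by rewrite sum_deltar.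
Qed.

Section Lin.
Variables (S T : finType) (L : op C S -> op C T).
Hypothesis hL : linmap L.

Lemma opext (U : finType) (X Y : op C U) : (forall i j, X i j = Y i j) -> X = Y.
Proof. by move=> e; apply: functional_extensionality => i; apply: functional_extensionality => j. Qed.

Lemma lin0 : L (fun _ _ => 0) = (fun _ _ => 0).
Proof.
have := hL 1 (fun _ _ => 0) (fun _ _ => 0).
rewrite (_ : addop _ _ = (fun _ _ => 0)); last by apply: opext => i j; rewrite /addop /scaleop mulr0 addr0.
move=> e; apply: opext => i j.
have : L (fun _ _ => 0) i j = L (fun _ _ => 0) i j + L (fun _ _ => 0) i j.
  by rewrite {1}e /addop /scaleop mul1r.
move=> h; apply: (addrI (L (fun _ _ => 0) i j)); rewrite addr0; exact: esym h.
Qed.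

Lemma linZ a X : L (scaleop a X) = scaleop a (L X).
Proof.
have := hL a X (fun _ _ => 0).
rewrite (_ : addop _ _ = scaleop a X); last by apply: opext => i j; rewrite /addop addr0.
move=> ->; rewrite lin0; apply: opext => i j; by rewrite /addop addr0.
Qed.

Lemma linD X Y : L (addop X Y) = addop (L X) (L Y).
Proof.
have := hL 1 X Y.
rewrite (_ : scaleop 1 X = X); last by apply: opext => i j; rewrite /scaleop mul1r.
move=> ->; apply: opext => i j; by rewrite /addop /scaleop mul1r.
Qed.

Lemma lin_sum (I : Type) (r : seq I) (F : I -> op C S) :
  L (fun x y => \sum_(i <- r) F i x y) = fun x y => \sum_(i <- r) L (F i) x y.
Proof.
elim: r => [|a r IH].
  rewrite (_ : (fun x y => _) = (fun _ _ => 0)); last by apply: opext => i j; rewrite big_nil.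
  by rewrite lin0; apply: opext => i j; rewrite big_nil.
rewrite (_ : (fun x y => _) = addop (F a) (fun x y => \sum_(i <- r) F i x y)); last first.
  by apply: opext => i j; rewrite big_cons.
by rewrite linD IH; apply: opext => i j; rewrite big_cons.
Qed.

Lemma lin_expand X i j : L X i j = \sum_a \sum_b X a b * L (ketbra C a b) i j.
Proof.
have eX : X = fun x y => \sum_(p : S * S) scaleop (X p.1 p.2) (ketbra C p.1 p.2) x y.
  apply: opext => x y; rewrite sum_pair /scaleop /ketbra /=.
  symmetry; transitivity (\sum_a (x == a)%:R * X a y); last by rewrite sum_delta'.
  apply: eq_bigr => a _; case: (eqVneq x a) => [<-|xa] /=.
    rewrite mul1r -(sum_deltar y (X x)); apply: eq_bigr => b _; by rewrite eq_sym.
  by rewrite mul0r big1 // => b _; rewrite mulr0.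
rewrite {1}eX lin_sum sum_pair; apply: eq_bigr => a _; apply: eq_bigr => b _ /=.
by rewrite linZ.
Qed.
End Lin.

End Gen.

Lemma det2 (K : comNzRingType) (G : 'M[K]_2) : \det G = G 0 0 * G 1 1 - G 0 1 * G 1 0.
Proof.
rewrite (expand_det_row _ 0) !big_ord_recl big_ord0 addr0 /cofactor !det_mx11 /=.
rewrite !mxE /=.
have l1 : lift 0 0 = 1 :> 'I_2 by apply/val_inj.
have l2 : lift ord0 0 = 1 :> 'I_2 by apply/val_inj.
have l3 : lift (lift ord0 ord0) 0 = 0 :> 'I_2 by apply/val_inj.
have l4 : lift ord0 ord0 = 1 :> 'I_2 by apply/val_inj.
have l5 : ord0 = 0 :> 'I_2 by apply/val_inj.
have l6 : lift 1 0 = 0 :> 'I_2 by apply/val_inj.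
by rewrite ?l1 ?l2 ?l3 ?l4 ?l5 /= expr0 expr1 l6 mul1r mulN1r mulrN.
Qed.

Section Key.
Variables (K : fieldType) (V : lmodType K) (G : 'M[K]_2).
Definition ginv (x : V * V) : V * V := (G 0 0 *: x.1 + G 1 0 *: x.2, G 0 1 *: x.1 + G 1 1 *: x.2).
Hypothesis dG : \det G != 0.
Lemma comb (u w p q r s : K) (x y : V) :
  u *: (p *: x - q *: y) + w *: (r *: x + s *: y) = (u * p + w * r) *: x + (w * s - u * q) *: y.
Proof.
rewrite !scalerDr !scalerN !scalerA addrACA scalerDl scalerBl; congr (_ + _); by rewrite addrC.
Qed.

Lemma keymapK : cancel (keymap G) ginv.
Proof.
case=> x y; rewrite /keymap /ginv /=.
have hd := det2 G.
rewrite !comb; congr (_ , _).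
- have -> : G 0 0 * ((\det G)^-1 * G 1 1) + G 1 0 * - ((\det G)^-1 * G 0 1) = 1.
    transitivity ((\det G)^-1 * (G 0 0 * G 1 1 - G 0 1 * G 1 0)); first ring.
    by rewrite -hd mulVf.
  have -> : G 1 0 * ((\det G)^-1 * G 0 0) - G 0 0 * ((\det G)^-1 * G 1 0) = 0 by ring.
  by rewrite scale1r scale0r addr0.
- have -> : G 0 1 * ((\det G)^-1 * G 1 1) + G 1 1 * - ((\det G)^-1 * G 0 1) = 0 by ring.
  have -> : G 1 1 * ((\det G)^-1 * G 0 0) - G 0 1 * ((\det G)^-1 * G 1 0) = 1.
    transitivity ((\det G)^-1 * (G 0 0 * G 1 1 - G 0 1 * G 1 0)); first ring.
    by rewrite -hd mulVf.
  by rewrite scale1r scale0r add0r.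
Qed.
End Key.


Section Gen2.
Variable C : numClosedFieldType.

Lemma kraus_lin (S T W : finType) (Phi : op C S -> op C T) (c : C) (K : W -> T -> S -> C) :
  (forall X i j, Phi X i j = c * \sum_t \sum_k \sum_l K t i k * X k l * (K t j l)^*) ->
  linmap Phi.
Proof.
move=> HP a X Y; apply: opext => i j; rewrite /addop /scaleop !HP.
rewrite mulrCA -mulrDr; congr (_ * _); rewrite big_distrr -big_split; apply: eq_bigr => t _ /=.
rewrite big_distrr -big_split; apply: eq_bigr => k _ /=.
rewrite big_distrr -big_split; apply: eq_bigr => l _ /=; ring.
Qed.

Lemma lin_comp (S T U : finType) (Phi : op C T -> op C U) (Psi : op C S -> op C T) :
  linmap Phi -> linmap Psi -> linmap (fun X => Phi (Psi X)).
Proof. by move=> h1 h2 a X Y; rewrite h2 h1. Qed.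

Lemma tensmap_lin (S1 T1 S2 T2 : finType) (L1 : op C S1 -> op C T1) (L2 : op C S2 -> op C T2) :
  linmap (tensmap L1 L2).
Proof.
move=> a X Y; apply: opext => i j; rewrite /addop /scaleop /tensmap.
rewrite big_distrr -big_split; apply: eq_bigr => p _ /=.
rewrite big_distrr -big_split; apply: eq_bigr => q _ /=; ring.
Qed.

Lemma trop_ketbra (T : finType) (a b : T) : trop (ketbra C a b) = (a == b)%:R.
Proof.
rewrite /trop /ketbra (bigD1 a) //= eqxx /= big1 ?addr0 // => i ia.
by rewrite (negbTE ia).
Qed.

Lemma tensmap_TP (S1 T1 S2 T2 : finType) (L1 : op C S1 -> op C T1) (L2 : op C S2 -> op C T2) :
  (forall X, trop (L1 X) = trop X) -> (forall X, trop (L2 X) = trop X) ->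
  forall X, trop (tensmap L1 L2 X) = trop X.
Proof.
move=> t1 t2 X; rewrite /trop /tensmap exchange_big /=.
apply: eq_bigr => a _; rewrite exchange_big /=.
transitivity (\sum_b X a b * ((a.1 == b.1)%:R * (a.2 == b.2)%:R)).
  apply: eq_bigr => b _; rewrite -big_distrr /=; congr (_ * _).
  rewrite sum_pair -(trop_ketbra a.1 b.1) -(trop_ketbra a.2 b.2) -t1 -t2 /trop big_distrl /=.
  by apply: eq_bigr => i _; rewrite big_distrr.
case: a => a1 a2 /=; rewrite sum_pair.
transitivity (\sum_b1 (a1 == b1)%:R * X (a1, a2) (a1, a2)); last by rewrite sum_delta'.
apply: eq_bigr => b1 _; case: (eqVneq a1 b1) => [<-|ne] /=.
  rewrite mul1r -(sum_delta' a2 (fun b2 => X (a1, a2) (a1, b2))); apply: eq_bigr => b2 _; ring.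
by rewrite mul0r big1 // => b2 _; rewrite mul0r mulr0.
Qed.

Lemma tensmap_CP (S1 T1 S2 T2 : finType) (L1 : op C S1 -> op C T1) (L2 : op C S2 -> op C T2) :
  linmap L1 -> linmap L2 -> CPall L1 -> CPall L2 -> CPall (tensmap L1 L2).
Proof.
move=> l1 l2 c1 c2 R X pX.
pose h1 (p : (R * S1) * S2) : R * (S1 * S2) := (p.1.1, (p.1.2, p.2)).
pose h1' (p : R * (S1 * S2)) : (R * S1) * S2 := ((p.1, p.2.1), p.2.2).
have h1K : cancel h1 h1' by case=> [[]].
have h1'K : cancel h1' h1 by case=> ? [].
have := c2 _ _ (psd_reindex h1K h1'K pX).
pose h2 (p : (R * T2) * S1) : (R * S1) * T2 := ((p.1.1, p.2), p.1.2).
pose h2' (p : (R * S1) * T2) : (R * T2) * S1 := ((p.1.1, p.2), p.1.2).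
have h2K : cancel h2 h2' by case=> [[]].
have h2'K : cancel h2' h2 by case=> [[]].
move=> /(psd_reindex h2K h2'K) /c1.
pose h3 (p : R * (T1 * T2)) : (R * T2) * T1 := ((p.1, p.2.2), p.2.1).
pose h3' (p : (R * T2) * T1) : R * (T1 * T2) := (p.1.1, (p.2, p.1.2)).
have h3K : cancel h3 h3' by case=> ? [].
have h3'K : cancel h3' h3 by case=> [[]].
move=> /(psd_reindex h3K h3'K); apply: psd_ext => -[r [t1 t2]] [r' [t1' t2']].
rewrite /idtens /h3 /h2 /h1 /=.
rewrite lin_expand //; under eq_bigr => a1 _ do under eq_bigr => b1 _ do rewrite lin_expand //.
rewrite /tensmap sum_pair /=; apply: eq_bigr => a1 _.
symmetry; under eq_bigr => a2 _ do rewrite sum_pair /=.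
rewrite exchange_big /=; apply: eq_bigr => b1 _.
rewrite big_distrl /=; apply: eq_bigr => a2 _.
rewrite big_distrl /=; apply: eq_bigr => b2 _; ring.
Qed.
End Gen2.


Section Gen3.
Variable C : numClosedFieldType.
Variables (T : finType) (f g : (T * T)%type -> (T * T)%type).
Hypotheses (fg : cancel f g) (gf : cancel g f).

Lemma nat_and (a b : bool) : ((a && b)%:R : C) = a%:R * b%:R.
Proof. by case: a; case: b; rewrite ?mul0r ?mul1r. Qed.

Lemma Emap_kraus (X : op C (T * T)%type) i j :
  ptrace2 (conj (permop C f) X) i j =
  1 * \sum_t \sum_k \sum_l permop C f (i, t) k * X k l * (permop C f (j, t) l)^*.
Proof.
rewrite mul1r /ptrace2 /conj /mulop /adjop; apply: eq_bigr => t _.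
under eq_bigr => l _ do rewrite big_distrl.
by rewrite exchange_big.
Qed.

Lemma Einv_kraus (c : C) (rho : op C T) x x' :
  mulop (mulop (adjop (permop C f)) (tensop rho (scaleop c (@idop C T)))) (permop C f) x x' =
  c * \sum_t \sum_k \sum_l (permop C f (k, t) x)^* * rho k l * ((permop C f (l, t) x')^*)^*.
Proof.
rewrite conj_perm_inv /tensop /scaleop /idop /permop.
move: (f x) (f x') => [u v] [u' v'] /=.
under eq_bigr => t _ do under eq_bigr => k _ do under eq_bigr => l _ do
  rewrite conjCK conjC_nat !xpair_eqE !nat_and.
transitivity (c * \sum_t (t == v)%:R * ((t == v')%:R * rho u u')); last first.
  congr (_ * _); apply: eq_bigr => t _; symmetry.
  transitivity (\sum_k (k == u)%:R * ((t == v)%:R * ((t == v')%:R * rho k u'))); last first.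
    by rewrite sum_delta.
  apply: eq_bigr => k _.
  transitivity (\sum_l (l == u')%:R * ((k == u)%:R * ((t == v)%:R * ((t == v')%:R * rho k l))));
    last by rewrite sum_delta.
  by apply: eq_bigr => l _; ring.
by rewrite sum_delta; ring.
Qed.

Lemma Emap_TP (X : op C (T * T)%type) : trop (ptrace2 (conj (permop C f) X)) = trop X.
Proof.
rewrite /trop /ptrace2.
under eq_bigr => a _ do under eq_bigr => t _ do rewrite (conj_perm fg gf).
rewrite -(sum_pair (fun y => X (g y) (g y))).
have bf : {on [pred i | true], bijective f} by exact: onW_bij _ (Bijective fg gf).
rewrite [RHS](reindex g) /=; first by [].
exact: onW_bij _ (Bijective gf fg).
Qed.

Lemma Einv_TP (c : C) (rho : op C T) :
  trop (mulop (mulop (adjop (permop C f)) (tensop rho (scaleop c (@idop C T)))) (permop C f)) =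
  c * #|T|%:R * trop rho.
Proof.
rewrite /trop; under eq_bigr => x _ do rewrite conj_perm_inv /tensop /scaleop /idop eqxx mulr1.
rewrite (reindex g) /=; last exact: onW_bij _ (Bijective gf fg).
under eq_bigr => y _ do rewrite gf.
rewrite sum_pair big_distrr /=; apply: eq_bigr => s _.
rewrite sumr_const -[_ *+ _]mulr_natl; ring.
Qed.
End Gen3.


Section Main.
Variables (C : numClosedFieldType) (d n : nat) (G : 'M['F_d]_2).
Hypothesis pd : prime d.
Hypothesis dG : \det G != 0.
Local Notation V := (qv d n).
Local Notation f := (@keymap _ V G).
Local Notation g := (@ginv _ V G).
Local Notation f2 := (@keymap _ (V * V)%type G).
Local Notation g2 := (@ginv _ (V * V)%type G).

Lemma fK : cancel f g. Proof. exact: keymapK. Qed.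
Lemma gK : cancel g f.
Proof. have [h hf fh] := injF_bij (can_inj fK); move=> y; by rewrite -{1}[y]fh fK fh. Qed.
Lemma f2K : cancel f2 g2. Proof. exact: keymapK. Qed.
Lemma g2K : cancel g2 f2.
Proof. have [h hf fh] := injF_bij (can_inj f2K); move=> y; by rewrite -{1}[y]fh f2K fh. Qed.

Lemma g2E (s i B B' : V) : g2 ((s, i), (B, B')) =
  (((g (s, B)).1, (g (i, B')).1), ((g (s, B)).2, (g (i, B')).2)).
Proof. reflexivity. Qed.

Let c : C := ((d ^ n)%:R)^-1.
Lemma dn0 : (d ^ n)%:R != 0 :> C.
Proof. by rewrite pnatr_eq0 -lt0n expn_gt0 prime_gt0. Qed.
Lemma cardV : #|V| = (d ^ n)%N.
Proof. by rewrite card_mx card_Fp // mul1n. Qed.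

Lemma choiE (L : op C V -> op C V) (hL : linmap L) s i k j :
  choi L (s, i) (k, j) = c * L (ketbra C s k) i j.
Proof.
rewrite /choi /idtens /maxent /=.
rewrite (_ : (fun _ _ => _) = scaleop c (ketbra C s k)); first by rewrite linZ.
by apply: opext => a b; rewrite /scaleop /ketbra /= [a == s]eq_sym [b == k]eq_sym.
Qed.

Lemma reorder4 (A B D E : finType) (F : A -> B -> D -> E -> C) :
  \sum_a \sum_b \sum_c \sum_e F a b c e = \sum_e \sum_a \sum_c \sum_b F a b c e.
Proof.
under eq_bigr => a _ do under eq_bigr => b _ do rewrite exchange_big.
under eq_bigr => a _ do rewrite exchange_big.
rewrite exchange_big; apply: eq_bigr => e _; apply: eq_bigr => a _; exact: exchange_big.
Qed.

Lemma aux5 (x y z w u : C) : x * y * (z * w) * u = x * z * (u * (y * w)).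
Proof. ring. Qed.

Lemma chconvE L1 L2 (h1 : linmap L1) (h2 : linmap L2) rho i j :
  chconv G L1 L2 rho i j = c * \sum_t \sum_s \sum_B \sum_k rho s k *
    (L1 (ketbra C (g (s, B)).1 (g (k, B)).1) (g (i, t)).1 (g (j, t)).1 *
     L2 (ketbra C (g (s, B)).2 (g (k, B)).2) (g (i, t)).2 (g (j, t)).2).
Proof.
rewrite /chconv /map_of_choi /scaleop /ptrace1 /mulop.
under eq_bigr => s _ do rewrite sum_pair.
under eq_bigr => s _ do under eq_bigr => k _ do under eq_bigr => k' _ do
   rewrite /tensop /transpose /idop /= mulrA.
under eq_bigr => s _ do under eq_bigr => k _ do rewrite sum_deltar.
rewrite /sconv2 /ptrace2 /Ukey2.
under eq_bigr => s _ do under eq_bigr => k _ do under eq_bigr => t _ do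
   rewrite (conj_perm f2K g2K).
under eq_bigr => s _ do under eq_bigr => k _ do rewrite sum_pair.
under eq_bigr => s _ do under eq_bigr => k _ do under eq_bigr => B _ do under eq_bigr => B' _ do
   rewrite !g2E /tensop !choiE //.
transitivity ((d ^ n)%:R * (c * c) * \sum_s \sum_k \sum_B \sum_B' rho s k *
    (L1 (ketbra C (g (s, B)).1 (g (k, B)).1) (g (i, B')).1 (g (j, B')).1 *
     L2 (ketbra C (g (s, B)).2 (g (k, B)).2) (g (i, B')).2 (g (j, B')).2)).
  rewrite -mulrA; congr (_ * _); rewrite big_distrr; apply: eq_bigr => s _ /=.
  rewrite big_distrr; apply: eq_bigr => k _ /=.
  rewrite big_distrl big_distrr; apply: eq_bigr => B _ /=.
  rewrite big_distrl big_distrr; apply: eq_bigr => B' _ /=.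
  by rewrite aux5.
rewrite mulrA /c (mulfV dn0) mul1r; congr (_ * _).
exact: reorder4.
Qed.



Lemma rhs_gen (W : finType) (f g : (W * W)%type -> (W * W)%type) (fg : cancel f g) (gf : cancel g f)
  (a0 : C) (P : W -> W -> C) (M : (W * W)%type -> (W * W)%type -> C) :
  \sum_a \sum_b P (f a).1 (f b).1 * (a0 * ((f a).2 == (f b).2)%:R) * M a b =
  a0 * \sum_s \sum_B \sum_k P s k * M (g (s, B)) (g (k, B)).
Proof.
have bg : {on [pred i | true], bijective g} by exact: onW_bij _ (Bijective gf fg).
rewrite (reindex g bg) /=.
under eq_bigr => a _ do rewrite (reindex g bg) /=.
under eq_bigr => a _ do under eq_bigr => b _ do rewrite !gf.
rewrite sum_pair big_distrr; apply: eq_bigr => s _; rewrite big_distrr; apply: eq_bigr => B _ /=.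
rewrite sum_pair /=.
rewrite big_distrr; apply: eq_bigr => k _ /=.
transitivity (\sum_B2 (B == B2)%:R * (a0 * (P s k * M (g (s, B)) (g (k, B2))))).
  by apply: eq_bigr => B2 _; ring.
by rewrite sum_delta'.
Qed.

Lemma rhsE L1 L2 rho i j :
  Emap G (tensmap L1 L2 (Einv G rho)) i j = c * \sum_t \sum_s \sum_B \sum_k rho s k *
    (L1 (ketbra C (g (s, B)).1 (g (k, B)).1) (g (i, t)).1 (g (j, t)).1 *
     L2 (ketbra C (g (s, B)).2 (g (k, B)).2) (g (i, t)).2 (g (j, t)).2).
Proof.
rewrite /Emap /ptrace2 /Ukey.
under eq_bigr => t _ do rewrite (conj_perm fK gK).
rewrite /tensmap /Einv /Ukey.
under eq_bigr => t _ do under eq_bigr => a _ do under eq_bigr => b _ do rewrite conj_perm_inv /tensop /scaleop /idop.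
rewrite big_distrr; apply: eq_bigr => t _ /=.
exact: (rhs_gen fK gK c rho (fun a b => L1 (ketbra C a.1 b.1) (g (i, t)).1 (g (j, t)).1 *
     L2 (ketbra C a.2 b.2) (g (i, t)).2 (g (j, t)).2)).
Qed.
End Main.


Unset Implicit Arguments.

Theorem mainTheorem18 (C : numClosedFieldType) (d n : nat) (G : 'M['F_d]_2)
    (L1 L2 : op C (qv d n) -> op C (qv d n)) :
  prime d -> (1 <= n)%N -> nontrivial G -> \det G != 0 ->
  is_channel L1 -> is_channel L2 ->
  is_channel (chconv G L1 L2) /\
  (forall rho : op C (qv d n),
     chconv G L1 L2 rho = Emap G (tensmap L1 L2 (Einv G rho))).
Proof.
move=> pd _ _ dG [l1 cp1 tp1] [l2 cp2 tp2].
have eq : chconv G L1 L2 = fun rho => Emap G (tensmap L1 L2 (Einv G rho)).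
  apply: functional_extensionality => rho; apply: opext => i j.
  by rewrite (chconvE pd dG) // rhsE.
split; last by move=> rho; rewrite eq.
rewrite eq.
have fK := fK (n := n) dG.
have gK := gK (n := n) dG.
have c0 : 0 <= ((d ^ n)%:R : C)^-1 by rewrite invr_ge0 ler0n.
have linE : linmap (@Emap C d G n).
  by apply: kraus_lin => X i j; rewrite /Emap /Ukey Emap_kraus.
have linI : linmap (@Einv C d G n).
  by apply: kraus_lin => X i j; rewrite /Einv /Ukey Einv_kraus.
have cpE : CPall (@Emap C d G n).
  by apply: (kraus_CP ler01) => X i j; rewrite /Emap /Ukey Emap_kraus.
have cpI : CPall (@Einv C d G n).
  by apply: (kraus_CP c0) => X i j; rewrite /Einv /Ukey Einv_kraus.
split.
- exact: lin_comp linE (lin_comp (tensmap_lin L1 L2) linI).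
- move=> k X pX.
  exact: (CP_comp cpE (CP_comp (tensmap_CP l1 l2 (CPk_all cp1) (CPk_all cp2)) cpI)) _ _ pX.
- move=> rho; rewrite /Emap /Ukey (Emap_TP fK gK) tensmap_TP // /Einv /Ukey (Einv_TP fK gK).
  by rewrite cardV // mulVf ?mul1r // dn0.
Qed.
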